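(* Let $K$ be an algebraically closed field of characteristic zero, $\deg_1$ the standard homogeneous degree on $K[x_1,\dots,x_n]$, $\Phi=(f_1,\dots,f_n)$ a polynomial automorphism of $K^n$, and $I=\{Q : Q(\overline{f_1},\dots,\overline{f_n})=0\}$ where $\overline{f_i}$ is the homogeneous component of highest degree of $f_i$. Then $I=(0)$ if and only if $\Phi$ is affine, i.e. $\deg_1(f_i)=1$ for all $i=1,\dots,n$. *)

(* Defs.v *)
From mathcomp Require Import all_boot all_order all_algebra.
From mathcomp Require Export mpoly.
Set Implicit Arguments. Unset Strict Implicit. Unset Printing Implicit Defensive.
Import GRing.Theory.
Local Open Scope ring_scope.

(* standard (homogeneous) degree deg_1 : msize p = 1 + total degree (0 for p = 0) *)
Definition deg1 {n : nat} {R : ringType} (p : {mpoly R[n]}) : nat := (msize p).-1.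

Definition top_form {n : nat} {R : ringType} (p : {mpoly R[n]}) : {mpoly R[n]} :=
  pihomog mdeg (deg1 p) p.

Definition poly_automorphism {n : nat} {R : ringType} (f : n.-tuple {mpoly R[n]}) : Prop :=
  exists g : n.-tuple {mpoly R[n]},
    (forall i : 'I_n, (tnth f i) \mPo g = 'X_i) /\
    (forall i : 'I_n, (tnth g i) \mPo f = 'X_i).

Definition top_forms {n : nat} {R : ringType} (f : n.-tuple {mpoly R[n]}) :
  n.-tuple {mpoly R[n]} := [tuple top_form (tnth f i) | i < n].

Definition relation_ideal {n : nat} {R : ringType} (f : n.-tuple {mpoly R[n]}) :
  {mpoly R[n]} -> Prop := fun Q => Q \mPo top_forms f = 0.

(* Main.v *)
From HB Require Import structures.
Require Import Defs.
From mathcomp Require Import all_boot all_order all_algebra.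
From mathcomp Require Import mpoly zify.
Set Implicit Arguments. Unset Strict Implicit. Unset Printing Implicit Defensive.
Import GRing.Theory.
Local Open Scope ring_scope.

Section Aux.
Variable (n : nat) (R : idomainType).
Implicit Types (p q a b : {mpoly R[n]}).

Lemma homog_mm_le (mf : measure n) e p :
  p \is e.-homog for mf -> (mmeasure mf p <= e.+1)%N.
Proof.
move/dhomogP=> h; rewrite mmeasureE; apply/bigmax_leqP_seq => m /h -> _ //.
Qed.

Lemma pihomog_small (mf : measure n) e p :
  (mmeasure mf p <= e)%N -> pihomog mf e p = 0.
Proof.
move=> hp; rewrite pihomogE big1_seq // => m /andP[/eqP hm hs].
have := mmeasure_mnm_lt mf hs; rewrite hm => /leq_trans /(_ hp).
by rewrite ltnn.
Qed.



Lemma comp0homog p (lq : n.-tuple {mpoly R[n]}) :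
  p \is 0.-homog -> p \mPo lq = p.
Proof.
move=> hp; rewrite comp_mpolyEX [RHS]mpolyE; apply: eq_big_seq => m hm.
have /eqP := dhomog_mf hp hm; rewrite mdeg_eq0 => /eqP ->.
by rewrite mpolyX0 comp_mpoly1.
Qed.

Lemma msizeM_le' p q : (msize (p * q) <= (msize p + msize q).-1)%N.
Proof.
have [->|nz_p] := eqVneq p 0; first by rewrite mul0r msize0.
have [->|nz_q] := eqVneq q 0; first by rewrite mulr0 msize0.
by rewrite msizeM.
Qed.

Definition topd p a (D : nat) := a \is D.-homog /\ (msize (p - a) <= D)%N.

Lemma topd_mul p a D q b E : topd p a D -> topd q b E -> topd (p * q) (a * b) (D + E).
Proof.
move=> [ha hpa] [hb hqb]; split; first exact: dhomogM.
have hq : (msize q <= E.+1)%N.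
  have -> : q = b + (q - b) by rewrite addrC subrK.
  apply: (leq_trans (msizeD_le _ _)); rewrite geq_max homog_mm_le //.
  exact: (leq_trans hqb).
have ha' := homog_mm_le ha.
have -> : p * q - a * b = (p - a) * q + a * (q - b).
  by rewrite mulrBl mulrBr addrA subrK.
apply: (leq_trans (msizeD_le _ _)); rewrite geq_max; apply/andP; split.
  apply: (leq_trans (msizeM_le' _ _)); lia.
apply: (leq_trans (msizeM_le' _ _)); lia.
Qed.

Lemma topd1 : topd 1 1 0.
Proof. by split; [exact: dhomog1 | rewrite subrr msize0]. Qed.

Lemma topdX p a D k : topd p a D -> topd (p ^+ k) (a ^+ k) (D * k).
Proof.
move=> h; elim: k => [|k ih]; first by rewrite !expr0 muln0; exact: topd1.
by rewrite !exprS mulnS; apply: topd_mul.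
Qed.

Lemma topd_prod (F A : 'I_n -> {mpoly R[n]}) (D : 'I_n -> nat) :
  (forall i, topd (F i) (A i) (D i)) ->
  topd (\prod_i F i) (\prod_i A i) (\sum_i D i).
Proof.
move=> h; apply: (big_rec3 (fun x y z => topd y z x)); first exact: topd1.
by move=> i x y z _ hz; apply: topd_mul.
Qed.

Lemma topd_pihomog_eq p a D : topd p a D -> pihomog mdeg D p = a.
Proof.
move=> [ha hpa]; have -> : p = a + (p - a) by rewrite addrC subrK.
by rewrite raddfD /= (pihomog_small (p := p - a)) // addr0 pihomog_dE.
Qed.

Lemma topd_pihomog_lt p a E D : topd p a E -> (E < D)%N -> pihomog mdeg D p = 0.
Proof.
move=> [ha hpa] lt; have -> : p = a + (p - a) by rewrite addrC subrK.
rewrite raddfD /= (pihomog_small (p := p - a)); last exact: (leq_trans hpa (ltnW lt)).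
by rewrite addr0 (pihomog_ne0 _ ha) // neq_ltn lt.
Qed.

Lemma topd_of p : topd p (top_form p) (deg1 p).
Proof.
split; first exact: pihomogP.
have hs : (msize p <= (deg1 p).+1)%N by rewrite /deg1; case: (msize p).
rewrite /top_form {1}(pihomog_partitionE hs) big_ord_recr /= addrK.
apply: (leq_trans (msize_sum _ _ _)); apply/bigmax_leqP => i _.
exact: (leq_trans (homog_mm_le (pihomogP _ _ _))).
Qed.

Lemma top_nz (mf : measure n) (g : {mpoly R[n]}) : g != 0 ->
  pihomog mf (mmeasure mf g).-1 g != 0.
Proof.
move=> nzg; apply/negP => /eqP h.
have hs := leqnn (mmeasure mf g).
have := pihomog_partitionE hs; rewrite (mpolySpred mf nzg) big_ord_recr /= h addr0.
move=> e.
have : (mmeasure mf (\sum_(i < (mmeasure mf g).-1) pihomog mf i g) <= (mmeasure mf g).-1)%N.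
  apply: (leq_trans (mmeasure_sum _ _ _ _)).
  apply/bigmax_leqP => i _; exact: (leq_trans (homog_mm_le (pihomogP _ _ _))).
by rewrite -e {1}(mpolySpred mf nzg) ltnn.
Qed.

End Aux.

Section CompA.
Variable (R : comRingType).
Lemma compA n k l (p : {mpoly R[n]}) (L : n.-tuple {mpoly R[k]})
  (M : k.-tuple {mpoly R[l]}) :
  (p \mPo L) \mPo M = p \mPo [tuple (tnth L i) \mPo M | i < n].
Proof.
elim/mpolyind: p => [|c m p _ _ ih]; first by rewrite !comp_mpoly0.
rewrite !comp_mpolyD ih; congr (_ + _).
rewrite !comp_mpolyZ !comp_mpolyX rmorph_prod; congr (_ *: _).
by apply: eq_bigr => i _; rewrite rmorphXn tnth_map tnth_ord_tuple.
Qed.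
End CompA.


Definition wdeg n (d : 'I_n -> nat) (m : 'X_{1..n}) : nat := (\sum_(i < n) d i * m i)%N.
Lemma wdeg0 n d : @wdeg n d 0%MM = 0%N.
Proof. by rewrite /wdeg big1 // => i _; rewrite mnm0E muln0. Qed.
Lemma wdegD n d : {morph @wdeg n d : m1 m2 / (m1 + m2)%MM >-> (m1 + m2)%N}.
Proof.
by move=> m1 m2; rewrite /wdeg -big_split /=; apply: eq_bigr => i _; rewrite mnmDE mulnDr.
Qed.
HB.instance Definition _ n d := isMeasure.Build n (@wdeg n d) (@wdeg0 n d) (@wdegD n d).

Section Main.
Variable (R : idomainType) (n : nat).

Lemma top_comp (d : 'I_n -> nat) (F A : n.-tuple {mpoly R[n]}) (g : {mpoly R[n]}) D :
  (forall j, topd (tnth F j) (tnth A j) (d j)) ->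
  (mmeasure (wdeg d) g <= D.+1)%N ->
  pihomog mdeg D (g \mPo F) = pihomog (wdeg d) D g \mPo A.
Proof.
move=> hF hg.
rewrite [in RHS]pihomogE big_mkcond /= (big_morph _ (comp_mpolyD A) (comp_mpoly0 A)).
rewrite comp_mpolyEX (big_morph _ (@pihomogD _ _ mdeg D) (@pihomog0 _ _ mdeg D)).
apply: eq_big_seq => m hm.
rewrite linearZ /= comp_mpolyX.
have ht : topd (\prod_i tnth F i ^+ m i) (\prod_i tnth A i ^+ m i) (wdeg d m).
  by apply: topd_prod => i; apply: topdX.
have hlt : (wdeg d m <= D)%N.
  by have := mmeasure_mnm_lt (wdeg d) hm => /leq_trans /(_ hg).
case: eqP => [<-|ne].
  by rewrite (topd_pihomog_eq ht) comp_mpolyZ comp_mpolyX.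
rewrite (topd_pihomog_lt ht) ?scaler0 ?comp_mpoly0 //.
by rewrite ltn_neqAle hlt andbT; apply/eqP.
Qed.

Lemma lin_comp (p : {mpoly R[n]}) (G : n.-tuple {mpoly R[n]}) : p \is 1.-homog ->
  pihomog mdeg 1 (p \mPo G) = p \mPo [tuple pihomog mdeg 1 (tnth G k) | k < n].
Proof.
move=> hp; rewrite !comp_mpolyEX raddf_sum /=; apply: eq_big_seq => m hm.
rewrite linearZ /=.
have /mdeg1P [k /eqP ->] : mdeg m == 1%N by rewrite (dhomog_mf hp hm).
by rewrite !comp_mpolyXU -!tnth_nth tnth_map tnth_ord_tuple.
Qed.

Definition sig (j : 'I_n) : n.-tuple {mpoly R[n]} :=
  [tuple if i == j then 0 else 'X_i | i < n].

Lemma sig_fix j (g : {mpoly R[n]}) :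
  (forall m, m \in msupp g -> m j = 0%N) -> g \mPo sig j = g.
Proof.
move=> h; rewrite comp_mpolyEX [RHS]mpolyE; apply: eq_big_seq => m hm.
congr (_ *: _); rewrite comp_mpolyX [RHS]mpolyXE_id; apply: eq_bigr => i _.
rewrite tnth_map tnth_ord_tuple; case: eqP => [->|//].
by rewrite h // !expr0.
Qed.

Lemma sig_X j : 'X_j \mPo sig j = 0.
Proof. by rewrite comp_mpolyXU -tnth_nth tnth_map tnth_ord_tuple eqxx. Qed.

End Main.

Lemma pihomogXU (R : idomainType) n (i : 'I_n) :
  pihomog mdeg 1 ('X_i : {mpoly R[n]}) = 'X_i.
Proof. by rewrite pihomog_dE // dhomogX /= mdeg1. Qed.

Theorem corollary4 (K : closedFieldType) (hK : [pchar K] =i pred0) (n : nat)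
  (f : n.-tuple {mpoly K[n]}) (hPhi : poly_automorphism f) :
  (forall Q : {mpoly K[n]}, relation_ideal f Q <-> Q = 0) <->
  (forall i : 'I_n, deg1 (tnth f i) = 1%N).
Proof.
have hA : forall j, tnth (top_forms f) j = top_form (tnth f j).
  by move=> j; rewrite tnth_mktuple.
have htop : forall j, topd (tnth f j) (tnth (top_forms f) j) (deg1 (tnth f j)).
  by move=> j; rewrite hA; exact: topd_of.
case: hPhi => g [hfg hgf].
have Xnz : forall j : 'I_n, 'X_j != 0 :> {mpoly K[n]}.
  by move=> j; rewrite -msize_poly_eq0 msizeX mdeg1.
split.
- move=> hI j.
  have inj : forall Q, Q \mPo top_forms f = 0 -> Q = 0 by move=> Q; apply: (hI Q).1.
  have d1 : (0 < deg1 (tnth f j))%N.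
    rewrite lt0n; apply/eqP => h0.
    have [hh hs] := htop j; rewrite h0 in hh hs.
    have e : tnth f j = tnth (top_forms f) j.
      by apply/eqP; rewrite -subr_eq0 -msize_poly_eq0 -leqn0.
    have : 'X_j - tnth f j = 0.
      apply: inj; rewrite comp_mpolyB comp_mpolyXU -tnth_nth e comp0homog //.
      by rewrite subrr.
    move/eqP; rewrite subr_eq0 => /eqP eX.
    by have := homog_mm_le hh; rewrite -e -eX msizeX mdeg1.
  have d2 : (deg1 (tnth f j) <= 1)%N.
    rewrite leqNgt; apply/negP => hd.
    pose d := fun i => deg1 (tnth f i).
    have hg0 : forall i (m : 'X_{1..n}), m \in msupp (tnth g i) -> m j = 0%N.
      move=> i m hm.
      have gnz : tnth g i != 0.
        apply/eqP => g0; have := hgf i; rewrite g0 comp_mpoly0 => /esym/eqP.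
        by rewrite (negbTE (Xnz i)).
      pose D := (mmeasure (wdeg d) (tnth g i)).-1.
      have hm2 : mmeasure (wdeg d) (tnth g i) = D.+1 by exact: mpolySpred.
      have e := @top_comp K n d f (top_forms f) (tnth g i) D htop (eq_leq hm2).
      rewrite hgf pihomogX in e.
      have hD : D = 1%N.
        move: e; set t := (mdeg _ == D); have -> : t = (1 == D)%N by rewrite /t mdeg1.
        case: eqP => // _ /esym /inj /eqP.
        by rewrite (negbTE (top_nz _ gnz)).
      have hw : (d j * m j <= @wdeg n d m)%N.
        by rewrite /wdeg (bigD1 j) //= leq_addr.
      have := mmeasure_mnm_lt (wdeg d) hm; rewrite hm2 hD.
      move: hw hd; rewrite /d /=; lia.
    have hs : forall i, tnth g i \mPo @sig K n j = tnth g i.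
      by move=> i; apply: sig_fix => m; exact: hg0.
    have := hfg j; move/(congr1 (comp_mpoly (@sig K n j))); rewrite compA (@sig_X K n j).
    have -> : [tuple tnth g i \mPo @sig K n j | i < n] = g.
      by apply: eq_from_tnth => i; rewrite tnth_map tnth_ord_tuple hs.
    by rewrite hfg; apply/eqP.
  by apply/eqP; rewrite eqn_leq d2 d1.
- move=> h1 Q; split; last by move=> ->; rewrite /relation_ideal comp_mpoly0.
  rewrite /relation_ideal => hQ.
  pose M := [tuple pihomog mdeg 1 (tnth g k) | k < n].
  have hL : forall j, tnth (top_forms f) j \mPo M = 'X_j.
    move=> j; have [hh hs] := htop j; rewrite h1 in hh hs.
    pose c := tnth f j - tnth (top_forms f) j.
    have hc : c = (c@_0)%:MP := msize1_polyC hs.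
    rewrite -lin_comp //.
    have ef : tnth f j = tnth (top_forms f) j + c by rewrite /c addrC subrK.
    have := hfg j; rewrite ef comp_mpolyD hc comp_mpolyC => e.
    have := congr1 (pihomog mdeg 1) e.
    rewrite raddfD /= (pihomog_small (p := (c@_0)%:MP)); last first.
      by rewrite msizeC leq_b1.
    by rewrite addr0 pihomogXU.
  rewrite -[Q]comp_mpoly_id.
  have -> : [tuple 'X_i | i < n] = [tuple tnth (top_forms f) i \mPo M | i < n].
    apply: eq_from_tnth => i; rewrite !tnth_map !tnth_ord_tuple.
    by rewrite -hA hL.
  by rewrite -compA hQ comp_mpoly0.
Qed.
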